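(* Let $F$ be a minimally unsatisfiable clause-set, $v$ an $m$-singular variable for $F$ ($m\ge1$), and $F' := \mathrm{DP}_v(F)$. 1. (a) If $m\ge2$, then $\mathrm{var}_s(F')\subseteq\mathrm{var}_s(F)$ and $\mathrm{var}_{1s}(F')\subseteq\mathrm{var}_{1s}(F)$. (b) If $m=1$, then $\mathrm{var}_{1s}(F')\setminus\mathrm{var}_{1s}(F)\subseteq\mathrm{var}_{\neg1s}(F)$. 2. (a) If $m=1$, then $\mathrm{var}_s(F)\setminus\{v\}\subseteq\mathrm{var}_s(F')$ and $\mathrm{var}_{1s}(F)\setminus\{v\}\subseteq\mathrm{var}_{1s}(F')$. (b) If $m\ge2$, then $\mathrm{var}_s(F)\setminus\mathrm{var}_s(F')\subseteq\mathrm{var}_{\neg1s}(F)$.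
   Context: Literals are variables $v$ and complements $\overline{v}$; a clause is a finite set of literals with no complementary pair; a clause-set is a finite set of clauses; $\mathrm{ldeg}_F(x)$ is the number of clauses of $F$ containing literal $x$, $\mathrm{vdeg}_F(v)=\mathrm{ldeg}_F(v)+\mathrm{ldeg}_F(\overline{v})$. $\mathrm{DP}_v(F) := \{C \in F : v \notin \mathrm{var}(C)\} \cup \{(C \cup D)\setminus\{v,\overline{v}\} : C, D \in F,\ C \cap \overline{D} = \{v\}\}$. A variable $v$ is singular for $F$ if $\min(\mathrm{ldeg}_F(v),\mathrm{ldeg}_F(\overline{v}))=1$, and $m$-singular if additionally $\mathrm{vdeg}_F(v)-1=m$. $\mathrm{var}_s(F)$ is the set of singular variables of $F$; $\mathrm{var}_{1s}(F):=\{v:\mathrm{ldeg}_F(v)=\mathrm{ldeg}_F(\overline{v})=1\}$ is the set of 1-singular variables; $\mathrm{var}_{\neg1s}(F):=\mathrm{var}_s(F)\setminus\mathrm{var}_{1s}(F)$ is the set of non-1-singular variables. *)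

(* Defs.v *)
From HB Require Import structures.
From mathcomp Require Import all_boot.
From mathcomp Require Import finmap.
Set Implicit Arguments. Unset Strict Implicit. Unset Printing Implicit Defensive.
Local Open Scope fset_scope.

Definition var_t := nat.
Definition lit := (nat * bool)%type.
Definition pos (v : nat) : lit := (v, true).
Definition neg (v : nat) : lit := (v, false).
Definition compl (x : lit) : lit := (x.1, ~~ x.2).

Definition clause := {fset lit}.
Definition clauseset := {fset clause}.

Definition is_clause (C : clause) : bool := [forall x : C, compl (val x) \notin C].
Definition is_clauseset (F : clauseset) : bool := [forall C : F, is_clause (val C)].

Definition var_cl (C : clause) : {fset nat} := [fset x.1 | x in C].
Definition complset (C : clause) : clause := [fset compl x | x in C].

Definition ldeg (F : clauseset) (x : lit) : nat := #|` [fset C in F | x \in C]|.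
Definition vdeg (F : clauseset) (v : nat) : nat := ldeg F (pos v) + ldeg F (neg v).

Definition DP (v : nat) (F : clauseset) : clauseset :=
  [fset C in F | v \notin var_cl C]
  `|` [fset ((C `|` D) `\` [fset pos v; neg v]) | C in F, D in F
         & C `&` complset D == [fset pos v]].

Definition sat_clause (phi : nat -> bool) (C : clause) : bool :=
  [exists x : C, phi (val x).1 == (val x).2].
Definition satisfiable (F : clauseset) : Prop :=
  exists phi : nat -> bool, forall C, C \in F -> sat_clause phi C.
Definition MU (F : clauseset) : Prop :=
  is_clauseset F /\ ~ satisfiable F /\
  forall G : clauseset, G `<` F -> satisfiable G.

Definition singular (F : clauseset) (v : nat) : Prop :=
  minn (ldeg F (pos v)) (ldeg F (neg v)) = 1.
Definition m_singular (F : clauseset) (m : nat) (v : nat) : Prop :=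
  singular F v /\ vdeg F v - 1 = m.
Definition in_var_s (F : clauseset) (v : nat) : Prop := singular F v.
Definition in_var_1s (F : clauseset) (v : nat) : Prop :=
  ldeg F (pos v) = 1 /\ ldeg F (neg v) = 1.
Definition in_var_n1s (F : clauseset) (v : nat) : Prop :=
  in_var_s F v /\ ~ in_var_1s F v.

(* Main.v *)
Require Import Defs.
From mathcomp Require Import all_boot.
From mathcomp Require Import finmap zify.
Set Implicit Arguments. Unset Strict Implicit. Unset Printing Implicit Defensive.
Local Open Scope fset_scope.

Lemma complK x : compl (compl x) = x.
Proof. by case: x => a c; rewrite /compl /= negbK. Qed.

Lemma in_complset x C : (x \in complset C) = (compl x \in C).
Proof.
apply/imfsetP/idP => [[y yC ->]|H]; first by rewrite complK.
by exists (compl x) => //; rewrite complK.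
Qed.

Lemma lit_v (x : lit) v b : x.1 = v -> x = (v, b) \/ x = (v, ~~ b).
Proof. by case: x => a c /= ->; case: b; case: c; auto. Qed.

Lemma var_clP v C : reflect (exists2 x, x \in C & x.1 = v) (v \in var_cl C).
Proof.
apply: (iffP idP) => [/imfsetP [x xC ->]|[x xC <-]]; first by exists x.
by apply/imfsetP; exists x.
Qed.

Lemma is_clauseP C x : is_clause C -> x \in C -> compl x \notin C.
Proof. by move=> /forallP H xC; apply: (H [` xC]). Qed.

Lemma satP phi C : reflect (exists2 x, x \in C & phi x.1 = x.2) (sat_clause phi C).
Proof.
apply: (iffP existsP) => [[x /eqP H]|[x xC H]].
  by exists (val x) => //; exact: valP.
by exists [` xC]; apply/eqP.
Qed.

Lemma mem_S y (X : clauseset) C : (C \in [fset C in X | y \in C]) = (C \in X) && (y \in C).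
Proof. by rewrite !inE. Qed.

Lemma card_disjU (A B : clauseset) : A `&` B = fset0 -> (#|` A `|` B| = #|` A| + #|` B|)%N.
Proof. by move=> H; have := cardfsUI A B; rewrite H cardfs0 addn0. Qed.

Lemma in_sep (T : choiceType) (A : {fset T}) (P : pred T) x :
  (x \in [fset y in A | P y]) = (x \in A) && P x.
Proof. by rewrite !inE. Qed.

Record setting (F : clauseset) (v : nat) (b : bool) (C0 : clause) : Prop := {
  st_isc : is_clauseset F; st_unsat : ~ satisfiable F;
  st_min : forall G, G `<` F -> satisfiable G;
  st_C0 : C0 \in F; st_sC0 : (v,b) \in C0;
  st_uniq : forall C, C \in F -> (v,b) \in C -> C = C0 }.

Definition Rv (v : nat) (C0 D : clause) : clause := (C0 `|` D) `\` [fset pos v; neg v].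

Lemma isc_mem F C : is_clauseset F -> C \in F -> is_clause C.
Proof. by move=> /forallP H CF; apply: (H [` CF]). Qed.

Lemma in_Rv v C0 D x : (x \in Rv v C0 D) = (x.1 != v) && ((x \in C0) || (x \in D)).
Proof.
rewrite /Rv in_fsetD in_fsetU !inE; case: x => a c /=.
rewrite /pos /neg !xpair_eqE; case: (eqVneq a v) => [->|av] /=; first by case: c.
by [].
Qed.

Section S.
Variables (F : clauseset) (v : nat) (b : bool) (C0 : clause).
Hypothesis (H : setting F v b C0).

Lemma flip_sat D phi : D \in F -> (v, ~~b) \in D ->
  (forall C, C \in F -> C != D -> sat_clause phi C) ->
  (sat_clause phi D \/ exists2 l, l \in C0 & l.1 != v /\ phi l.1 = l.2) ->
  satisfiable F.
Proof.
move=> DF sD Hs [HD|[l lC0 [lv Hl]]].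
  exists phi => C CF; case: (eqVneq C D) => [->//|CD]; exact: Hs.
pose phi' u := if u == v then ~~ b else phi u.
exists phi' => C CF; case: (eqVneq C D) => [->|CD].
  by apply/satP; exists (v, ~~b) => //; rewrite /phi' /= eqxx.
have /satP [x xC Hx] := Hs C CF CD.
case: (eqVneq x.1 v) => [xv|xv].
  case: (lit_v b xv) => xe.
    have CC0 : C = C0 by apply: (st_uniq H) => //; rewrite -xe.
    by apply/satP; exists l; [rewrite CC0| rewrite /phi' (negbTE lv)].
  by apply/satP; exists x => //; rewrite /phi' xv eqxx xe.
by apply/satP; exists x => //; rewrite /phi' (negbTE xv).
Qed.

Lemma sat_sub D : D \in F -> exists phi, forall C, C \in F -> C != D -> sat_clause phi C.
Proof.
move=> DF; have [phi Hphi] := st_min H (fproperD1 DF).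
by exists phi => C CF CD; apply: Hphi; rewrite in_fsetD1 CD.
Qed.

Lemma noclash D y : D \in F -> (v, ~~b) \in D -> y \in C0 -> compl y \in D -> y.1 = v.
Proof.
move=> DF sD yC cyD; apply/eqP; apply/negPn/negP => yv.
have [phi Hphi] := sat_sub DF.
apply: (st_unsat H); apply: (flip_sat DF sD Hphi).
case: (boolP (phi y.1 == y.2)) => [/eqP Hy|Hy]; first by right; exists y.
left; apply/satP; exists (compl y) => //=.
by move: Hy; case: (phi y.1); case: (y.2).
Qed.

Lemma R_notin D : D \in F -> (v, ~~b) \in D -> Rv v C0 D \notin F.
Proof.
move=> DF sD; apply/negP => RF.
have [phi Hphi] := sat_sub DF.
apply: (st_unsat H); apply: (flip_sat DF sD Hphi).
have RD : Rv v C0 D != D.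
  by apply/eqP => E; move: sD; rewrite -E in_Rv /= eqxx.
have /satP [x] := Hphi _ RF RD; rewrite in_Rv => /andP [xv /orP [xC|xD]] Hx.
  by right; exists x.
by left; apply/satP; exists x.
Qed.

Lemma R_inj D1 D2 : D1 \in F -> (v, ~~b) \in D1 -> D2 \in F -> (v, ~~b) \in D2 ->
  Rv v C0 D1 = Rv v C0 D2 -> D1 = D2.
Proof.
move=> D1F s1 D2F s2 E; apply/eqP; apply/negPn/negP => ne.
have [phi Hphi] := sat_sub D1F.
apply: (st_unsat H); apply: (flip_sat D1F s1 Hphi).
have ne' : D2 != D1 by rewrite eq_sym.
have /satP [x xD2 Hx] := Hphi _ D2F ne'.
case: (eqVneq x.1 v) => [xv|xv].
  case: (lit_v b xv) => xe.
    have := is_clauseP (isc_mem (st_isc H) D2F) s2.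
    by rewrite /compl /= negbK -xe xD2.
  by left; apply/satP; exists x => //; rewrite xe.
have : x \in Rv v C0 D1 by rewrite E in_Rv xv xD2 orbT.
rewrite in_Rv xv /= => /orP [xC|xD]; first by right; exists x.
by left; apply/satP; exists x.
Qed.

End S.

Section S3.
Variables (F : clauseset) (v : nat) (b : bool) (C0 : clause).
Hypothesis (H : setting F v b C0).

Local Notation Ds := ([fset D in F | (v, ~~b) \in D]).
Local Notation Rest := ([fset C in F | v \notin var_cl C]).

Lemma resolv A B : A \in F -> pos v \in A -> neg v \in B ->
  (forall y, y \in A -> compl y \in B -> y.1 = v) -> A `&` complset B = [fset pos v].
Proof.
move=> AF pA nB Hc; apply/fsetP => y; rewrite in_fsetI in_complset in_fset1.
case: (eqVneq y (pos v)) => [->|ne]; first by rewrite pA.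
apply/negbTE/negP => /andP [yA cyB].
case: (lit_v true (Hc y yA cyB)) => ye; first by rewrite ye eqxx in ne.
have := is_clauseP (isc_mem (st_isc H) AF) pA.
by rewrite /compl /= -ye yA.
Qed.

Lemma DP_eq : DP v F = Rest `|` (Rv v C0 @` Ds).
Proof.
rewrite /DP; congr (_ `|` _); apply/fsetP => E; apply/imfset2P/imfsetP.
  move=> [C CF [D]]; rewrite inE /= => /andP [DF /eqP cond] ->.
  have {}DF : D \in F by exact: DF.
  have {}CF : C \in F by exact: CF.
  have : pos v \in C `&` complset D by rewrite cond in_fset1.
  rewrite in_fsetI in_complset => /andP [pC nD].
  case: b H pC nD => Hs pC nD.
    have CC0 := st_uniq Hs CF pC; subst C.
    by exists D => //; rewrite !inE; apply/andP; split.
  have DC0 := st_uniq Hs DF nD; subst D.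
  by exists C; [rewrite !inE; apply/andP; split | rewrite /Rv fsetUC].
move=> [D]; rewrite inE => /andP [DF sD] ->.
have nc := noclash H DF sD.
case: b H sD nc => Hs sD nc.
  exists C0; first exact: (st_C0 Hs).
  exists D; last by [].
  rewrite inE DF /=; apply/eqP; apply: resolv => //; first exact: (st_C0 Hs).
  exact: (st_sC0 Hs).
exists D => //; exists C0; last by rewrite /Rv fsetUC.
rewrite inE (st_C0 Hs) /=; apply/eqP; apply: resolv => //; first exact: (st_sC0 Hs).
move=> y yD cyC; have := nc (compl y) cyC; rewrite complK => /(_ yD).
by case: y {yD cyC}.
Qed.

Definition Sy (y : lit) (X : clauseset) := [fset C in X | y \in C].

Lemma ldeg_DP y : ldeg (DP v F) y = (#|` Sy y Rest| + #|` [fset D in Ds | y \in Rv v C0 D]|)%N.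
Proof.
have E : Sy y (DP v F) = Sy y Rest `|` (Rv v C0 @` [fset D in Ds | y \in Rv v C0 D]).
  apply/fsetP => C; rewrite /Sy DP_eq in_sep !in_fsetU in_sep; apply/andP/orP.
    move=> [/orP [CR|/imfsetP [D DDs ->]] yC]; first by left; rewrite !in_sep CR.
    right; apply/imfsetP; exists D => //.
    have {}DDs : D \in Ds := DDs.
    by rewrite in_sep DDs.
  move=> [|/imfsetP [D DDs ->]]; first by rewrite !in_sep => /andP [-> ->].
  have {}DDs : D \in [fset D in Ds | y \in Rv v C0 D] := DDs.
  move: DDs; rewrite in_sep => /andP [DDs yR]; split => //; apply/orP; right.
  by apply/imfsetP; exists D.
rewrite /ldeg -/(Sy y (DP v F)) E card_disjU.
  congr (_ + _)%N; apply/eqP/card_in_imfsetP => D1 D2.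
  rewrite !in_sep => /andP [/andP [D1F s1] _] /andP [/andP [D2F s2] _].
  by move=> ER; apply: (R_inj H D1F s1 D2F s2 ER).
apply/fsetP => C; rewrite in_fsetI in_fset0; apply/negP => /andP [].
rewrite /Sy !in_sep => /andP [/andP [CF _] _] /imfsetP [D DDs CE].
have {}DDs : D \in [fset D in Ds | y \in Rv v C0 D] := DDs.
move: DDs; rewrite !in_sep => /andP [/andP [DF sD] _].
by have := R_notin H DF sD; rewrite -CE CF.
Qed.

Lemma C0_notRest : C0 \notin Rest.
Proof.
by rewrite in_sep (st_C0 H) /=; apply/negPn/var_clP; exists (v, b) => //; exact: (st_sC0 H).
Qed.

Lemma ldeg_F_C0 y : y \in C0 -> (#|` Sy y Rest| + 1 <= ldeg F y)%N.
Proof.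
move=> yC; rewrite /ldeg -/(Sy y F) addn1.
have <- : #|` C0 |` Sy y Rest| = (#|` Sy y Rest|).+1.
  by rewrite cardfsU1 inE negb_and C0_notRest.
apply: fsubset_leq_card; apply/fsubsetP => C; rewrite !inE.
case/orP => [/eqP ->|/andP [/andP [CF _] yC']]; first by rewrite (st_C0 H) yC.
by rewrite CF yC'.
Qed.

Lemma ldeg_F_nC0 y : y \notin C0 ->
  ldeg F y = (#|` Sy y Rest| + #|` [fset D in Ds | y \in D]|)%N.
Proof.
move=> yC; rewrite /ldeg -/(Sy y F) -card_disjU.
  congr (#|` _|); apply/fsetP => C; rewrite /Sy in_fsetU !in_sep.
  apply/andP/orP.
    move=> [CF yC']; case: (boolP (v \in var_cl C)) => [/var_clP [x xC xv]|nv].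
      case: (lit_v b xv) => xe.
        have xC' : (v, b) \in C by rewrite -xe.
        by have CC0 := st_uniq H CF xC'; subst C; rewrite yC' in yC.
      by right; rewrite CF -xe xC.
    by left; rewrite CF yC'.
  by case=> /andP [/andP [-> _] ->].
apply/fsetP => C; rewrite in_fsetI in_fset0; apply/negP; rewrite /Sy !in_sep.
move=> /andP [/andP [/andP [_ nv] _] /andP [/andP [_ sC] _]].
by move/var_clP: nv; apply; exists (v, ~~b).
Qed.

Lemma lit_C0 y : y.1 != v -> y \in C0 -> ldeg (DP v F) y = (#|` Sy y Rest| + #|` Ds|)%N.
Proof.
move=> yv yC; rewrite ldeg_DP; congr (_ + #|` _|)%N.
by apply/fsetP => D; rewrite !in_sep in_Rv yv yC /= andbT.
Qed.

Lemma lit_nC0 y : y.1 != v -> y \notin C0 -> ldeg (DP v F) y = ldeg F y.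
Proof.
move=> yv yC; rewrite ldeg_DP ldeg_F_nC0 //; congr (_ + #|` _|)%N.
by apply/fsetP => D; rewrite !in_sep in_Rv yv (negbTE yC).
Qed.

Lemma ldeg_DP_v c : ldeg (DP v F) (v, c) = 0.
Proof.
rewrite ldeg_DP; apply/eqP; rewrite addn_eq0 !cardfs_eq0; apply/andP; split; apply/eqP/fsetP => C;
  rewrite ?in_sep; apply/negP.
  move=> /andP [/andP [_ nv] vC]; move/var_clP: nv; apply; by exists (v, c).
by move=> /andP [_]; rewrite in_Rv /= eqxx.
Qed.

End S3.

Lemma var_facts F v b C0 w : setting F v b C0 -> w != v ->
  let m := #|` [fset D in F | (v, ~~b) \in D]| in
  let a := ldeg F (pos w) in let c := ldeg F (neg w) in
  let a' := ldeg (DP v F) (pos w) in let c' := ldeg (DP v F) (neg w) in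
  (a' = a /\ c' = c) \/
  (m <= a' /\ a' + 1 <= a + m /\ 1 <= a /\ c' = c)%N \/
  (m <= c' /\ c' + 1 <= c + m /\ 1 <= c /\ a' = a)%N.
Proof.
move=> H wv m a c a' c'.
have isC0 := isc_mem (st_isc H) (st_C0 H).
case: (boolP (pos w \in C0)) => pC.
  have nC : neg w \notin C0 by have := is_clauseP isC0 pC.
  right; left; rewrite /a' /c' /a /c (lit_C0 H) // (lit_nC0 H) //.
  have := ldeg_F_C0 H pC; rewrite /m; lia.
case: (boolP (neg w \in C0)) => nC.
  have pC' : compl (neg w) \notin C0 by have := is_clauseP isC0 nC.
  right; right; rewrite /a' /c' /a /c (lit_C0 H) // (lit_nC0 H) //.
  have := ldeg_F_C0 H nC; rewrite /m; lia.
by left; rewrite /a' /c' /a /c !(lit_nC0 H).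
Qed.

Theorem corollary25 (F : clauseset) (m v : nat) :
  MU F -> m_singular F m v -> 1 <= m ->
  let F' := DP v F in
  (* 1(a) *)
  (2 <= m ->
     (forall w, in_var_s F' w -> in_var_s F w) /\
     (forall w, in_var_1s F' w -> in_var_1s F w)) /\
  (* 1(b) *)
  (m = 1 ->
     forall w, in_var_1s F' w -> ~ in_var_1s F w -> in_var_n1s F w) /\
  (* 2(a) *)
  (m = 1 ->
     (forall w, in_var_s F w -> w <> v -> in_var_s F' w) /\
     (forall w, in_var_1s F w -> w <> v -> in_var_1s F' w)) /\
  (* 2(b) *)
  (2 <= m ->
     forall w, in_var_s F w -> ~ in_var_s F' w -> in_var_n1s F w).
Proof.
move=> [isc [unsat mini]] [sing vd] m1 F'.
have [b [Hb1 Hbm]] : exists b, ldeg F (v, b) = 1 /\ ldeg F (v, ~~b) = m.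
  move: sing vd; rewrite /singular /vdeg /pos /neg.
  case: (eqVneq (ldeg F (v, true)) 1) => e.
    by exists true; split => //=; lia.
  by exists false; split => /=; lia.
have [C0 HC0] : exists C0, [fset C in F | (v, b) \in C] = [fset C0].
  by apply/cardfs1P; apply/eqP; exact: Hb1.
have : C0 \in [fset C in F | (v, b) \in C] by rewrite HC0 in_fset1.
rewrite in_sep => /andP [C0F sC0].
have uniq : forall C, C \in F -> (v, b) \in C -> C = C0.
  move=> C CF sC; have : C \in [fset C in F | (v, b) \in C] by rewrite in_sep CF.
  by rewrite HC0 in_fset1 => /eqP.
have H : setting F v b C0 by split.
have Hm : #|` [fset D in F | (v, ~~b) \in D]| = m := Hbm.
have key : forall w, w != v ->
  let a := ldeg F (pos w) in let c := ldeg F (neg w) in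
  let a' := ldeg F' (pos w) in let c' := ldeg F' (neg w) in
  (a' = a /\ c' = c) \/
  (m <= a' /\ a' + 1 <= a + m /\ 1 <= a /\ c' = c)%N \/
  (m <= c' /\ c' + 1 <= c + m /\ 1 <= c /\ a' = a)%N.
  by move=> w wv; have := var_facts H wv; rewrite Hm.
have kp : ldeg F' (pos v) = 0 := ldeg_DP_v H true.
have kn : ldeg F' (neg v) = 0 := ldeg_DP_v H false.
have vsum : (ldeg F (pos v) + ldeg F (neg v) = m + 1)%N by move: vd; rewrite /vdeg; lia.
rewrite /in_var_n1s /in_var_s /in_var_1s /singular.
split; [|split; [|split]].
- move=> m2; split => w; (case: (eqVneq w v) => [->|wv]; [rewrite kp kn; lia|]);
  have := key w wv; simpl; lia.
- move=> m_1 w; (case: (eqVneq w v) => [->|wv]; [rewrite kp kn; lia|]);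
  have := key w wv; simpl; lia.
- move=> m_1; split => w; (case: (eqVneq w v) => [->|wv]; [done|]);
  have := key w wv; simpl; lia.
- move=> m2 w; (case: (eqVneq w v) => [->|wv]; [rewrite kp kn; lia|]);
  have := key w wv; simpl; lia.
Qed.
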